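(* Let $m\ge4$ and let $(c_1,\dots,c_m)\in\mathbb{C}^m$ be a quiddity cycle with at least one nonzero entry, with associated tame frieze pattern entries $a_{i,j}$. Then there exists a triangulation of the convex $m$-gon with vertices $1,\dots,m$ such that $a_{i,j}\ne0$ for every diagonal $(i,j)$ of the triangulation (i.e. the frieze pattern has a cluster without zero entry).
   Context: $\eta(c)=\begin{pmatrix}c&-1\\1&0\end{pmatrix}$. A quiddity cycle is $(c_1,\dots,c_m)$ with $\eta(c_1)\cdots\eta(c_m)=-I$. The associated tame frieze pattern is built as follows: - extend $(c_k)$ $m$-periodically; - set $M_{i,j}=\eta(c_i)\cdots\eta(c_j)$ for $i-1\le j$, the empty product being $I$; - its entries are $a_{i,j+2}=(M_{i,j})_{1,1}$ for $i-1\le j\le i+m-3$. A diagonal of the $m$-gon with vertices $1,\dots,m$ (in cyclic order) is a pair $(i,j)$ with $1\le i<j\le m$, $j-i\ge2$, $(i,j)\ne(1,m)$. A triangulation (cluster) is a maximal set of pairwise non-crossing diagonals; the corresponding entries $a_{i,j}$ form a cluster of the frieze pattern. *)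

(* Defs.v *)
From Stdlib Require Import Reals List Arith.
Open Scope R_scope.

Record Cplx : Type := mkC { Re : R ; Im : R }.
Definition C0 : Cplx := mkC 0 0.
Definition C1 : Cplx := mkC 1 0.
Definition Cadd (x y : Cplx) : Cplx := mkC (Re x + Re y) (Im x + Im y).
Definition Copp (x : Cplx) : Cplx := mkC (- Re x) (- Im x).
Definition Cmul (x y : Cplx) : Cplx :=
  mkC (Re x * Re y - Im x * Im y) (Re x * Im y + Im x * Re y).

Record M2 : Type := mkM2 { m11 : Cplx ; m12 : Cplx ; m21 : Cplx ; m22 : Cplx }.
Definition M2mul (A B : M2) : M2 :=
  mkM2 (Cadd (Cmul (m11 A) (m11 B)) (Cmul (m12 A) (m21 B)))
       (Cadd (Cmul (m11 A) (m12 B)) (Cmul (m12 A) (m22 B)))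
       (Cadd (Cmul (m21 A) (m11 B)) (Cmul (m22 A) (m21 B)))
       (Cadd (Cmul (m21 A) (m12 B)) (Cmul (m22 A) (m22 B))).
Definition M2id : M2 := mkM2 C1 C0 C0 C1.
Definition M2negid : M2 := mkM2 (Copp C1) C0 C0 (Copp C1).

Definition eta (c : Cplx) : M2 := mkM2 c (Copp C1) C1 C0.

Close Scope R_scope.

(** A sequence (c_1,...,c_m) is given as a list [cs] of length m;
    [cper cs k] is the m-periodic extension, c_k = nth ((k-1) mod m). *)
Definition cper (cs : list Cplx) (k : nat) : Cplx :=
  nth ((k - 1) mod (length cs)) cs C0.

Fixpoint Mprod (cs : list Cplx) (i n : nat) : M2 :=
  match n with
  | O => M2id
  | S n' => M2mul (eta (cper cs i)) (Mprod cs (S i) n')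
  end.

Definition quiddity_cycle (cs : list Cplx) : Prop :=
  Mprod cs 1 (length cs) = M2negid.

(** M_{i,j} = eta(c_i)...eta(c_j) has j - i + 1 factors, and
    a_{i,j+2} = (M_{i,j})_{1,1}; hence for i < j,
    a_{i,j} = (M_{i,j-2})_{1,1}, a product of j - i - 1 factors. *)
Definition frieze_entry (cs : list Cplx) (i j : nat) : Cplx :=
  m11 (Mprod cs i (j - i - 1)).

Definition diagonal (m i j : nat) : Prop :=
  1 <= i /\ i < j /\ j <= m /\ 2 <= j - i /\ ~ (i = 1 /\ j = m).

Definition crossing (i j k l : nat) : Prop :=
  (i < k < j /\ j < l) \/ (k < i < l /\ l < j).

Definition triangulation (m : nat) (T : nat -> nat -> Prop) : Prop :=
  (forall i j, T i j -> diagonal m i j) /\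
  (forall i j k l, T i j -> T k l -> ~ crossing i j k l) /\
  (forall i j, diagonal m i j ->
     (forall k l, T k l -> ~ crossing i j k l) -> T i j).

(* Main.v *)
Require Import Defs.
From Stdlib Require Import Reals List Arith.
From Stdlib Require Import Lia Lra Classical.

Definition Csub (x y : Cplx) := Cadd x (Copp y).

Ltac cdestr := repeat match goal with x : Cplx |- _ => destruct x end.

Lemma Cring : ring_theory Defs.C0 Defs.C1 Cadd Cmul Csub Copp (@eq Cplx).
Proof.
  constructor; intros; cdestr; unfold Csub, Cadd, Cmul, Copp, Defs.C0, Defs.C1; simpl;
  f_equal; ring.
Qed.
Add Ring Cring : Cring.

Lemma C1_neq_C0 : Defs.C1 <> Defs.C0.
Proof. intro H; injection H; intros; apply R1_neq_R0; auto. Qed.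

Lemma Cmul_integral a b : Cmul a b = Defs.C0 -> b <> Defs.C0 -> a = Defs.C0.
Proof.
  destruct a as [a1 a2], b as [b1 b2]; unfold Cmul, Defs.C0; simpl; intros H Hb.
  injection H; intros E2 E1.
  assert (Hs : (b1*b1 + b2*b2 <> 0)%R).
  { intro Hs. apply Hb. assert (h1 : (b1*b1 = 0)%R) by nra. assert (h2 : (b2*b2 = 0)%R) by nra.
    apply Rmult_integral in h1; apply Rmult_integral in h2.
    destruct h1, h2; subst; auto. }
  assert (a1 * (b1*b1+b2*b2) = 0)%R.
  { replace (a1 * (b1*b1+b2*b2))%R with (b1 * (a1 * b1 - a2 * b2) + b2 * (a1 * b2 + a2 * b1))%R by ring.
    rewrite E1, E2; ring. }
  assert (a2 * (b1*b1+b2*b2) = 0)%R.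
  { replace (a2 * (b1*b1+b2*b2))%R with (b1 * (a1 * b2 + a2 * b1) - b2 * (a1 * b1 - a2 * b2))%R by ring.
    rewrite E1, E2; ring. }
  f_equal.
  - destruct (Rmult_integral _ _ H0); auto; contradiction.
  - destruct (Rmult_integral _ _ H1); auto; contradiction.
Qed.

Lemma M2mul_assoc A B C : M2mul A (M2mul B C) = M2mul (M2mul A B) C.
Proof. destruct A, B, C; unfold M2mul; simpl; f_equal; ring. Qed.

Lemma M2mul_id_l A : M2mul M2id A = A.
Proof. destruct A; unfold M2mul, M2id; simpl; f_equal; ring. Qed.
Lemma M2mul_id_r A : M2mul A M2id = A.
Proof. destruct A; unfold M2mul, M2id; simpl; f_equal; ring. Qed.

Lemma Mprod_add cs a : forall i b, Mprod cs i (a + b) = M2mul (Mprod cs i a) (Mprod cs (i + a) b).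
Proof.
  induction a; intros i b; simpl.
  - rewrite M2mul_id_l, Nat.add_0_r; auto.
  - rewrite IHa, M2mul_assoc. do 2 f_equal. lia.
Qed.

Definition detM (A : M2) := Csub (Cmul (m11 A) (m22 A)) (Cmul (m12 A) (m21 A)).

Lemma detM_mul A B : detM (M2mul A B) = Cmul (detM A) (detM B).
Proof. destruct A, B; unfold detM, M2mul; simpl; ring. Qed.

Lemma detM_Mprod cs i n : detM (Mprod cs i n) = Defs.C1.
Proof.
  revert i; induction n; intros i; simpl.
  - unfold detM, M2id; simpl; ring.
  - rewrite detM_mul, IHn. unfold detM, eta; simpl; ring.
Qed.

Definition cdet (a b : Cplx * Cplx) := Csub (Cmul (fst a) (snd b)) (Cmul (snd a) (fst b)).
Definition W cs k := (Copp (m12 (Mprod cs 1 k)), Copp (m22 (Mprod cs 1 k))).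

Lemma F1 cs i n : 1 <= i -> m11 (Mprod cs i n) = cdet (W cs (i-1)) (W cs (i+n)).
Proof.
  intros Hi. unfold W.
  replace (i + n) with ((i - 1) + (n + 1)) by lia.
  rewrite (Mprod_add cs (i-1) 1 (n+1)).
  replace (1 + (i-1)) with i by lia.
  rewrite (Mprod_add cs n i 1). simpl.
  pose proof (detM_Mprod cs 1 (i-1)) as HD.
  generalize dependent (Mprod cs 1 (i-1)). generalize (Mprod cs i n).
  intros [x11 x12 x21 x22] [p11 p12 p21 p22] HD.
  unfold detM in HD; simpl in HD.
  unfold cdet, M2mul, eta, M2id; simpl.
  transitivity (Cmul (Csub (Cmul p11 p22) (Cmul p12 p21)) x11); [rewrite HD; ring | ring].
Qed.

Import ListNotations.


Definition adjo (l : list nat) (a b : nat) : Prop :=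
  (forall z, In z l -> ~ (a < z < b)) \/ (forall z, In z l -> a <= z <= b).
Definition adj l a b := (a < b /\ adjo l a b) \/ (b < a /\ adjo l b a).
Definition nb l x y := In y l /\ adj l x y.
Definition chord l a b := a < b /\ In a l /\ In b l /\ ~ adjo l a b.
Definition ear (S : nat -> nat -> Prop) l x :=
  In x l /\ exists u v, u <> v /\ nb l x u /\ nb l x v /\ ~ S u v.

Definition inst_done {A : Type} (h : A) (w : nat) := True.

Ltac inst_all :=
  repeat match goal with
  | H : forall z, In z ?l -> _, Hz : In ?w ?l |- _ =>
      lazymatch goal with
      | _ : inst_done H w |- _ => fail
      | _ => let h := fresh "I" in pose proof (H w Hz) as h;
             assert (inst_done H w) by exact I
      end
  end.

Ltac split_adj :=
  unfold nb, adj, adjo in *;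
  repeat match goal with
  | H : _ /\ _ |- _ => destruct H
  | H : _ \/ _ |- _ => destruct H
  end.

Lemma nb_unique l x a b c : In x l -> nb l x a -> nb l x b -> nb l x c ->
  a = b \/ a = c \/ b = c.
Proof. intros. split_adj; inst_all; lia. Qed.

Lemma triangle l x u v : In x l -> nb l x u -> nb l x v -> u <> v -> adj l u v ->
  forall z, In z l -> z = x \/ z = u \/ z = v.
Proof. intros. split_adj; inst_all; lia. Qed.

Lemma cross_x l x u v y : In x l -> nb l x u -> nb l x v -> u < v -> In y l ->
  y <> x -> y <> u -> y <> v ->
  (x < y -> crossing x y u v) /\ (y < x -> crossing y x u v).
Proof. intros. unfold crossing. split_adj; inst_all; lia. Qed.

Lemma new_adj l x u v : In x l -> nb l x u -> nb l x v -> u < v ->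
  adjo (remove Nat.eq_dec x l) u v.
Proof.
  intros. split_adj;
  first [ left; intros z Hz; apply in_remove in Hz; destruct Hz as [Hz Hzx];
          inst_all; lia
        | right; intros z Hz; apply in_remove in Hz; destruct Hz as [Hz Hzx];
          inst_all; lia ].
Qed.

Lemma nocross l a b c d : adjo l a b -> a < b -> In c l -> In d l -> c < d ->
  ~ crossing a b c d /\ ~ crossing c d a b.
Proof. intros. unfold crossing. split_adj; inst_all; lia. Qed.

Lemma adjo_sub l l' a b : incl l' l -> adjo l a b -> adjo l' a b.
Proof. unfold adjo, incl; intros Hi [H|H]; [left|right]; intros z Hz; apply H; auto. Qed.

Lemma adj_sub l l' a b : incl l' l -> adj l a b -> adj l' a b.
Proof. unfold adj; intros Hi [[? H]|[? H]]; [left|right]; split; eauto using adjo_sub. Qed.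

Lemma incl_remove x l : incl (remove Nat.eq_dec x l) l.
Proof. intros z Hz; apply in_remove in Hz; tauto. Qed.

Lemma nb_sym l x y : In x l -> nb l x y -> nb l y x.
Proof. unfold nb, adj; intros Hx [Hy H]; split; auto; tauto. Qed.

Lemma nb_neq l x y : nb l x y -> x <> y.
Proof. unfold nb, adj; intros [_ [[? _]|[? _]]]; lia. Qed.

Lemma nb_remove l x y z : nb l y z -> z <> x -> nb (remove Nat.eq_dec x l) y z.
Proof.
  intros [Hz Ha] Hzx; split. apply in_in_remove; auto.
  eapply adj_sub; [apply incl_remove | exact Ha].
Qed.

Lemma nb_after_remove l x u v : In x l -> nb l x u -> nb l x v -> u <> v ->
  nb (remove Nat.eq_dec x l) u v.
Proof.
  intros Hx Hu Hv Huv.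
  assert (u <> x) by (apply not_eq_sym; eapply nb_neq; eauto).
  assert (v <> x) by (apply not_eq_sym; eapply nb_neq; eauto).
  split. apply in_in_remove; auto. apply Hv.
  unfold adj. destruct (Nat.lt_total u v) as [Ho|[Ho|Ho]]; [| lia |].
  - left; split; [exact Ho | eapply new_adj; eauto].
  - right; split; [exact Ho | eapply new_adj; eauto].
Qed.

Lemma adj_new l x u v a b : In x l -> nb l x u -> nb l x v -> u < v -> a < b ->
  In a l -> In b l -> a <> x -> b <> x ->
  adjo (remove Nat.eq_dec x l) a b -> ~ adjo l a b -> a = u /\ b = v.
Proof.
  intros Hx Hu Hv Huv Hab Ha Hb Hax Hbx Hr Hn.
  assert (HR : forall z, In z l -> z <> x -> In z (remove Nat.eq_dec x l))
    by (intros; apply in_in_remove; auto).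
  assert (Hfin : nb l x a -> nb l x b -> a = u /\ b = v).
  { intros Na Nb.
    pose proof (nb_unique l x u v a Hx Hu Hv Na).
    pose proof (nb_unique l x u v b Hx Hu Hv Nb). lia. }
  apply Hfin; clear Hfin.
  - destruct Hr as [Hr|Hr].
    + assert (exists z, In z l /\ a < z < b) as [z [Hz Hz']].
      { apply NNPP; intro C; apply Hn; left; intros z Hz Hz'; apply C; eauto. }
      assert (z = x) by (apply NNPP; intro; eapply Hr; eauto). subst z.
      split; auto. right; split; [lia|]. left; intros z0 Hz0 Hz2.
      destruct (Nat.eq_dec z0 x); [lia|]. eapply Hr; eauto; lia.
    + assert (exists z, In z l /\ ~ (a <= z <= b)) as [z [Hz Hz']].
      { apply NNPP; intro C; apply Hn; right; intros z Hz.
        apply NNPP; intro; apply C; eauto. }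
      assert (z = x) by (apply NNPP; intro; apply Hz'; apply Hr; eauto). subst z.
      split; auto. destruct (Nat.lt_ge_cases x a).
      * left; split; [lia|]. left; intros z0 Hz0 Hz2.
        destruct (Nat.eq_dec z0 x); [lia|]. specialize (Hr z0 (HR z0 Hz0 n)); lia.
      * right; split; [lia|]. right; intros z0 Hz0.
        destruct (Nat.eq_dec z0 x); [lia|]. specialize (Hr z0 (HR z0 Hz0 n)); lia.
  - destruct Hr as [Hr|Hr].
    + assert (exists z, In z l /\ a < z < b) as [z [Hz Hz']].
      { apply NNPP; intro C; apply Hn; left; intros z Hz Hz'; apply C; eauto. }
      assert (z = x) by (apply NNPP; intro; eapply Hr; eauto). subst z.
      split; auto. left; split; [lia|]. left; intros z0 Hz0 Hz2.
      destruct (Nat.eq_dec z0 x); [lia|]. eapply Hr; eauto; lia.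
    + assert (exists z, In z l /\ ~ (a <= z <= b)) as [z [Hz Hz']].
      { apply NNPP; intro C; apply Hn; right; intros z Hz.
        apply NNPP; intro; apply C; eauto. }
      assert (z = x) by (apply NNPP; intro; apply Hz'; apply Hr; eauto). subst z.
      split; auto. destruct (Nat.lt_ge_cases x a).
      * left; split; [lia|]. right; intros z0 Hz0.
        destruct (Nat.eq_dec z0 x); [lia|]. specialize (Hr z0 (HR z0 Hz0 n)); lia.
      * right; split; [lia|]. left; intros z0 Hz0 Hz2.
        destruct (Nat.eq_dec z0 x); [lia|]. specialize (Hr z0 (HR z0 Hz0 n)); lia.
Qed.

Lemma NoDup_remove' x l : NoDup l -> NoDup (remove Nat.eq_dec x l).
Proof.
  induction 1; simpl. constructor.
  destruct (Nat.eq_dec x x0); auto. constructor; auto.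
  intro Hc; apply in_remove in Hc; tauto.
Qed.

Lemma len_incl (l l' : list nat) : NoDup l -> incl l l' -> length l <= length l'.
Proof. apply NoDup_incl_length. Qed.

Lemma least (P : nat -> Prop) : (exists n, P n) -> exists n, P n /\ forall m, P m -> n <= m.
Proof.
  intros [n Hn]. apply NNPP; intro C.
  assert (forall k, ~ P k) as H.
  { intro k; induction k as [k IH] using (well_founded_induction lt_wf).
    intro Pk; apply C; exists k; split; auto; intros m Pm.
    apply NNPP; intro; apply (IH m); auto; lia. }
  eapply H; eauto.
Qed.

Lemma greatest (P : nat -> Prop) B : (exists n, P n) -> (forall n, P n -> n <= B) ->
  exists n, P n /\ forall m, P m -> m <= n.
Proof.
  revert P; induction B; intros P Hex Hb.
  - destruct Hex as [n Hn]. exists n; split; auto. intros m Pm; specialize (Hb m Pm); lia.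
  - destruct (classic (P (S B))). exists (S B); auto.
    apply IHB; auto. intros n Pn; specialize (Hb n Pn).
    destruct (Nat.eq_dec n (S B)); subst; [tauto|lia].
Qed.

Lemma bound (l : list nat) : exists B, forall z, In z l -> z <= B.
Proof.
  induction l as [|a l [B HB]]. exists 0; simpl; tauto.
  exists (a + B); simpl; intros z [->|Hz]; [lia|specialize (HB z Hz); lia].
Qed.

Lemma two_nb l v : NoDup l -> In v l -> 3 <= length l ->
  exists w1 w2, w1 <> w2 /\ nb l v w1 /\ nb l v w2.
Proof.
  intros Hnd Hv Hlen.
  assert (third : forall a, exists z, In z l /\ z <> v /\ z <> a).
  { intro a. apply NNPP; intro C.
    assert (length l <= length [v; a]).
    { apply len_incl; auto. intros z Hz. simpl.
      apply NNPP; intro D; apply C; exists z; repeat split; auto; intro; subst; tauto. }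
    simpl in *; lia. }
  destruct (bound l) as [B HB].
  destruct (classic (exists z, In z l /\ v < z)) as [Ha|Ha];
  destruct (classic (exists z, In z l /\ z < v)) as [Hb|Hb].
  - destruct (least _ Ha) as [a [[Ina Ha1] Ha2]].
    destruct (greatest (fun z => In z l /\ z < v) v Hb) as [b [[Inb Hb1] Hb2]]; [intros; lia|].
    exists a, b; split; [lia|]. split; split; auto.
    + left; split; auto; left; intros z Hz Hz'. specialize (Ha2 z (conj Hz (proj1 Hz'))). lia.
    + right; split; auto; left; intros z Hz Hz'. specialize (Hb2 z (conj Hz (proj2 Hz'))). lia.
  - destruct (least _ Ha) as [a [[Ina Ha1] Ha2]].
    destruct (greatest (fun z => In z l) B) as [M [InM HM]]; [eauto|auto|].
    destruct (third a) as [z [Hz [Hz1 Hz2]]].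
    assert (v < z) by (destruct (Nat.lt_total v z) as [|[|]]; auto; [congruence|exfalso; eauto]).
    pose proof (Ha2 z (conj Hz H)). pose proof (HM z Hz).
    exists a, M; split; [lia|]. split; split; auto.
    + left; split; auto; left; intros y Hy Hy'. pose proof (Ha2 y (conj Hy (proj1 Hy'))). lia.
    + left; split; [lia|]; right; intros y Hy. split; auto.
      destruct (Nat.lt_ge_cases y v); auto. exfalso; eauto.
  - destruct (least (fun z => In z l)) as [m0 [Inm Hm]]; [eauto|].
    destruct (greatest (fun z => In z l /\ z < v) v Hb) as [b [[Inb Hb1] Hb2]]; [intros; lia|].
    destruct (third b) as [z [Hz [Hz1 Hz2]]].
    assert (z < v) by (destruct (Nat.lt_total v z) as [|[|]]; auto; [exfalso; eauto|congruence]).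
    pose proof (Hb2 z (conj Hz H)). pose proof (Hm z Hz).
    exists b, m0; split; [lia|]. split; split; auto.
    + right; split; auto; left; intros y Hy Hy'. pose proof (Hb2 y (conj Hy (proj2 Hy'))). lia.
    + right; split; [lia|]; right; intros y Hy. split; auto.
      destruct (Nat.lt_ge_cases v y); [exfalso; eauto|lia].
  - destruct (third v) as [z [Hz [Hz1 Hz2]]].
    destruct (Nat.lt_total v z) as [|[|]]; [exfalso; eauto|congruence|exfalso; eauto].
Qed.

Lemma other_nb l v x : NoDup l -> In v l -> 3 <= length l ->
  exists w, nb l v w /\ w <> x.
Proof.
  intros. destruct (two_nb l v) as [w1 [w2 [? [? ?]]]]; auto.
  destruct (Nat.eq_dec w1 x); [exists w2|exists w1]; split; auto; congruence.
Qed.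

Lemma tri_len l x u v : NoDup l -> In x l -> nb l x u -> nb l x v -> u <> v ->
  adj l u v -> length l <= 3.
Proof.
  intros. change 3 with (length [x;u;v]). apply len_incl; auto.
  intros z Hz. pose proof (triangle l x u v H0 H1 H2 H3 H4 z Hz). simpl; intuition.
Qed.

Lemma mk_ear (S : nat -> nat -> Prop) l y u v : In y l -> u <> v -> nb l y u -> nb l y v -> ~ S u v -> ear S l y.
Proof. intros; split; auto; exists u, v; auto. Qed.

Lemma good_ear (S : nat -> nat -> Prop) (Ssym : forall a b, S a b -> S b a) l :
  NoDup l -> 4 <= length l ->
  (forall a b c, In b l -> S a b -> S b c -> S a c) ->
  (forall a b, In a l -> nb l a b -> ~ S a b) ->
  forall x, ear S l x -> exists y, ear S l y /\ exists y', ear S (remove Nat.eq_dec y l) y'.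
Proof.
  intros Hnd Hlen Htr Hpr x [Hx [u [v [Huv [Hu [Hv HS]]]]]].
  destruct (classic (exists y', ear S (remove Nat.eq_dec x l) y')) as [E|NE].
  { exists x; split; auto. split; auto. exists u, v; auto. }
  assert (Hvl : In v l) by apply Hv.
  assert (Hul : In u l) by apply Hu.
  assert (Hvx : v <> x) by (apply not_eq_sym; eapply nb_neq; eauto).
  assert (Hux : u <> x) by (apply not_eq_sym; eapply nb_neq; eauto).
  destruct (other_nb l v x) as [w [Hw Hwx]]; auto; try lia.
  assert (Hwl : In w l) by apply Hw.
  assert (Hwv : w <> v) by (apply not_eq_sym; eapply nb_neq; eauto).
  assert (Hwu : w <> u).
  { intro; subst w. assert (length l <= 3); [|lia].
    eapply (tri_len l x u v); eauto. apply nb_sym in Hw; auto. apply Hw. }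
  assert (Suw : S u w).
  { apply NNPP; intro C; apply NE; exists v; apply (mk_ear _ _ _ u w); auto.
    - apply in_in_remove; auto.
    - apply nb_sym; [apply in_in_remove; auto|]. apply nb_after_remove; auto.
    - apply nb_remove; auto. }
  exists v; split.
  { apply (mk_ear _ _ _ x w); auto.
    - apply nb_sym; auto.
    - intro Sxw. apply (Hpr x u Hx Hu). apply (Htr x w u); auto. }
  destruct (other_nb l w v) as [z [Hz Hzv]]; auto; try lia.
  assert (Hzl : In z l) by apply Hz.
  assert (Hzx : z <> x).
  { intro; subst z. apply nb_sym in Hz; auto.
    destruct (nb_unique l x u v w) as [?|[?|?]]; auto; congruence. }
  assert (Svz : S v z).
  { apply NNPP; intro C; apply NE; exists w; apply (mk_ear _ _ _ v z); auto.
    - apply in_in_remove; auto.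
    - apply nb_remove; auto. apply nb_sym; auto.
    - apply nb_remove; auto. }
  exists w; apply (mk_ear _ _ _ x z); auto.
  - apply in_in_remove; auto.
  - apply nb_sym; [apply in_in_remove; auto|]. apply nb_after_remove; auto.
    all: try (apply nb_sym; auto); congruence.
  - apply nb_remove; auto.
  - intro Sxz. apply (Hpr x v Hx Hv). apply (Htr x z v); auto.
Qed.

Lemma no_chord3 l a b : NoDup l -> length l <= 3 -> ~ chord l a b.
Proof.
  intros Hnd Hl [Hab [Ha [Hb Hn]]].
  assert (exists z, In z l /\ a < z < b) as [z [Hz Hz']].
  { apply NNPP; intro C; apply Hn; left; intros z Hz Hz'; apply C; eauto. }
  assert (exists z, In z l /\ ~ (a <= z <= b)) as [y [Hy Hy']].
  { apply NNPP; intro C; apply Hn; right; intros y Hy.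
    apply NNPP; intro; apply C; eauto. }
  assert (4 <= length l); [|lia].
  change 4 with (length [a;b;z;y]). apply len_incl.
  - repeat constructor; simpl; lia.
  - intros t Ht; simpl in Ht; intuition congruence.
Qed.

Lemma main_tri (S : nat -> nat -> Prop) (Ssym : forall a b, S a b -> S b a) :
  forall n l, length l <= n -> NoDup l ->
  (forall a b c, In b l -> S a b -> S b c -> S a c) ->
  (forall a b, In a l -> nb l a b -> ~ S a b) ->
  (length l <= 3 \/ exists x, ear S l x) ->
  exists T : nat -> nat -> Prop,
    (forall a b, T a b -> chord l a b) /\
    (forall a b c d, T a b -> T c d -> ~ crossing a b c d) /\
    (forall a b, chord l a b -> (forall c d, T c d -> ~ crossing a b c d) -> T a b) /\
    (forall a b, T a b -> ~ S a b).
Proof.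
  induction n; intros l Hn Hnd Htr Hpr Hear.
  - exists (fun _ _ => False); repeat split; try tauto.
    intros a b Hc; exfalso; eapply no_chord3; eauto; lia.
  - destruct (le_lt_dec (length l) 3) as [Hl3|Hl4].
    { exists (fun _ _ => False); repeat split; try tauto.
      intros a b Hc; exfalso; eapply no_chord3; eauto. }
    destruct Hear as [|[x0 Hx0]]; [lia|].
    assert (exists y, ear S l y /\ (length (remove Nat.eq_dec y l) <= 3 \/
                                     exists y', ear S (remove Nat.eq_dec y l) y')) as
      [y [[Hy [u [v [Huv [Hu [Hv HS]]]]]] Hnext]].
    { destruct (Nat.eq_dec (length l) 4).
      - exists x0; split; auto. left.
        pose proof (remove_length_lt Nat.eq_dec l x0 (proj1 Hx0)); lia.
      - destruct (good_ear S Ssym l Hnd ltac:(lia) Htr Hpr x0 Hx0) as [y [? ?]].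
        eauto. }
    assert (exists pu pv, pu < pv /\ nb l y pu /\ nb l y pv /\ ~ S pu pv)
      as [pu [pv [Hpuv [Hpu [Hpv HSp]]]]].
    { destruct (Nat.lt_total u v) as [|[|]]; [exists u, v | congruence | exists v, u];
      repeat split; auto; try apply Hu; try apply Hv; try apply Hu; auto. }
    clear u v Huv Hu Hv HS.
    set (l' := remove Nat.eq_dec y l).
    assert (Hin' : forall z, In z l' <-> In z l /\ z <> y).
    { intro z; split; [apply in_remove|intros [? ?]; apply in_in_remove; auto]. }
    assert (Hpul : In pu l) by apply Hpu.
    assert (Hpvl : In pv l) by apply Hpv.
    assert (Hpuy : pu <> y) by (apply not_eq_sym; eapply nb_neq; eauto).
    assert (Hpvy : pv <> y) by (apply not_eq_sym; eapply nb_neq; eauto).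
    assert (Hnew : adjo l' pu pv) by (eapply new_adj; eauto).
    destruct (IHn l') as [T' [HT1 [HT2 [HT3 HT4]]]].
    + pose proof (remove_length_lt Nat.eq_dec l y Hy). unfold l'; lia.
    + apply NoDup_remove'; auto.
    + intros a b c Hb; apply Htr; apply Hin'; auto.
    + intros a b Ha [Hb Hab]. apply Hin' in Ha; apply Hin' in Hb.
      destruct Ha as [Ha Hay]; destruct Hb as [Hb Hby].
      destruct Hab as [[Hab Ho]|[Hab Ho]].
      * destruct (classic (adjo l a b)).
        -- apply Hpr; auto. split; auto. left; auto.
        -- destruct (adj_new l y pu pv a b) as [-> ->]; auto.
      * destruct (classic (adjo l b a)).
        -- apply Hpr; auto. split; auto. right; auto.
        -- destruct (adj_new l y pu pv b a) as [-> ->]; auto.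
    + exact Hnext.
    + exists (fun a b => T' a b \/ (a = pu /\ b = pv)). split; [|split; [|split]].
      * intros a b [Ht|[-> ->]].
        -- destruct (HT1 a b Ht) as [? [Ha [Hb Hn']]].
           split; auto. split; [apply Hin' in Ha; tauto|]. split; [apply Hin' in Hb; tauto|].
           intro; apply Hn'; eapply adjo_sub; eauto; apply incl_remove.
        -- split; auto. split; auto. split; auto. intro Ha.
           assert (length l <= 3); [|lia].
           apply (tri_len l y pu pv); auto; [lia|]. left; auto.
      * intros a b c d [Ht|[-> ->]] [Ht'|[-> ->]].
        -- apply HT2; auto.
        -- destruct (HT1 a b Ht) as [? [Ha [Hb _]]].
           apply (nocross l' pu pv a b); auto.
        -- destruct (HT1 c d Ht') as [? [Ha [Hb _]]].
           apply (nocross l' pu pv c d); auto.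
        -- unfold crossing; lia.
      * intros a b Hc Hnc.
        destruct Hc as [Hab [Ha [Hb Hna]]].
        destruct (Nat.eq_dec a y) as [->|Hay].
        { destruct (Nat.eq_dec b pu) as [->|].
          { exfalso; apply Hna. destruct Hpu as [_ [[? ?]|[? ?]]]; auto; lia. }
          destruct (Nat.eq_dec b pv) as [->|].
          { exfalso; apply Hna. destruct Hpv as [_ [[? ?]|[? ?]]]; auto; lia. }
          exfalso; apply (Hnc pu pv); auto.
          apply (cross_x l y pu pv b); auto; lia. }
        destruct (Nat.eq_dec b y) as [->|Hby].
        { destruct (Nat.eq_dec a pu) as [->|].
          { exfalso; apply Hna. destruct Hpu as [_ [[? ?]|[? ?]]]; auto; lia. }
          destruct (Nat.eq_dec a pv) as [->|].
          { exfalso; apply Hna. destruct Hpv as [_ [[? ?]|[? ?]]]; auto; lia. }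
          exfalso; apply (Hnc pu pv); auto.
          apply (cross_x l y pu pv a); auto; lia. }
        destruct (classic (adjo l' a b)).
        -- right. apply (adj_new l y pu pv a b); auto.
        -- left. apply HT3.
           ++ split; auto. split; [apply Hin'; auto|]. split; [apply Hin'; auto|]. auto.
           ++ intros c d Hcd; apply Hnc; auto.
      * intros a b [Ht|[-> ->]]; auto.
Qed.

Definition Srel cs a b := cdet (W cs (a-1)) (W cs (b-1)) = Defs.C0.

Lemma frieze_W cs i j : 1 <= i -> i < j -> frieze_entry cs i j = cdet (W cs (i-1)) (W cs (j-1)).
Proof. intros. unfold frieze_entry. rewrite F1 by lia. do 2 f_equal; lia. Qed.

Lemma cdet_consec cs k : 1 <= k -> cdet (W cs (k-1)) (W cs k) = Defs.C1.
Proof. intros. rewrite <- (Nat.add_0_r k) at 2. rewrite <- F1 by lia. reflexivity. Qed.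

Lemma W0 cs : W cs 0 = (Copp Defs.C0, Copp Defs.C1).
Proof. reflexivity. Qed.

Lemma Wm cs : quiddity_cycle cs -> W cs (length cs) = (Copp Defs.C0, Copp (Copp Defs.C1)).
Proof. unfold quiddity_cycle, W; intros H; rewrite H; reflexivity. Qed.

Lemma Ssym cs a b : Srel cs a b -> Srel cs b a.
Proof.
  unfold Srel; intros H.
  replace (cdet (W cs (b-1)) (W cs (a-1))) with (Copp (cdet (W cs (a-1)) (W cs (b-1))))
    by (unfold cdet; ring).
  rewrite H; ring.
Qed.

Lemma cdet_trans x y z : cdet x y = Defs.C0 -> cdet y z = Defs.C0 ->
  cdet y (Defs.C1, Defs.C1) <> Defs.C0 \/ True -> (fst y <> Defs.C0 \/ snd y <> Defs.C0) ->
  cdet x z = Defs.C0.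
Proof.
  intros H1 H2 _ [Hy|Hy].
  - apply (Cmul_integral _ (fst y)); auto.
    transitivity (Cadd (Cmul (cdet y z) (fst x)) (Cmul (cdet x y) (fst z))).
    + unfold cdet; ring.
    + rewrite H1, H2; ring.
  - apply (Cmul_integral _ (snd y)); auto.
    transitivity (Cadd (Cmul (cdet y z) (snd x)) (Cmul (cdet x y) (snd z))).
    + unfold cdet; ring.
    + rewrite H1, H2; ring.
Qed.

Lemma Strans cs a b c : 1 <= b -> Srel cs a b -> Srel cs b c -> Srel cs a c.
Proof.
  unfold Srel; intros Hb H1 H2. apply (cdet_trans _ _ _ H1 H2 (or_intror I)).
  apply NNPP; intro C.
  assert (fst (W cs (b-1)) = Defs.C0) by (apply NNPP; tauto).
  assert (snd (W cs (b-1)) = Defs.C0) by (apply NNPP; tauto).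
  pose proof (cdet_consec cs b Hb). unfold cdet in H3. rewrite H, H0 in H3.
  apply C1_neq_C0. rewrite <- H3. ring.
Qed.

Lemma nb_seq_succ m k : 1 <= k -> k + 1 <= m ->
  nb (seq 1 m) k (k+1) /\ nb (seq 1 m) (k+1) k.
Proof.
  intros. split; split; try (apply in_seq; lia).
  - left; split; [lia|]. left; intros; lia.
  - right; split; [lia|]. left; intros; lia.
Qed.

Lemma nb_seq_end m : 2 <= m -> nb (seq 1 m) 1 m /\ nb (seq 1 m) m 1.
Proof.
  intros. split; split; try (apply in_seq; lia).
  - left; split; [lia|]. right; intros z Hz; apply in_seq in Hz; lia.
  - right; split; [lia|]. right; intros z Hz; apply in_seq in Hz; lia.
Qed.

Lemma chord_diag m i j : chord (seq 1 m) i j <-> diagonal m i j.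
Proof.
  unfold chord, diagonal, adjo; split.
  - intros [Hij [Hi [Hj Hn]]]. apply in_seq in Hi; apply in_seq in Hj.
    repeat split; try lia.
    + destruct (le_lt_dec 2 (j - i)); auto. exfalso; apply Hn; left; intros; lia.
    + intros [-> ->]. apply Hn; right; intros z Hz; apply in_seq in Hz; lia.
  - intros [Hi [Hij [Hj [H2 Hn]]]]. repeat split; try (apply in_seq; lia); auto.
    intros [H|H].
    + apply (H (i+1)); [apply in_seq|]; lia.
    + destruct (Nat.eq_dec i 1).
      * assert (j < m) by (destruct (Nat.eq_dec j m); [tauto|lia]).
        specialize (H m ltac:(apply in_seq; lia)); lia.
      * specialize (H 1 ltac:(apply in_seq; lia)); lia.
Qed.

Lemma cdet_W0_l p : cdet (Copp Defs.C0, Copp Defs.C1) p = cdet p (Copp Defs.C0, Copp (Copp Defs.C1)).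
Proof. destruct p; unfold cdet; simpl; ring. Qed.

Lemma cdet_Wm_r p : cdet p (Copp Defs.C0, Copp (Copp Defs.C1)) = Copp (cdet p (Copp Defs.C0, Copp Defs.C1)).
Proof. destruct p; unfold cdet; simpl; ring. Qed.

Lemma Copp_0 a : Copp a = Defs.C0 -> a = Defs.C0.
Proof. intros H. transitivity (Copp (Copp a)); [ring|]. rewrite H; ring. Qed.

Lemma proper_seq cs : 2 <= length cs -> quiddity_cycle cs ->
  forall a b, In a (seq 1 (length cs)) -> nb (seq 1 (length cs)) a b -> ~ Srel cs a b.
Proof.
  intros Hm Hq.
  set (m := length cs) in *.
  assert (key : forall a b, a < b -> In a (seq 1 m) -> In b (seq 1 m) ->
            adjo (seq 1 m) a b -> ~ Srel cs a b).
  { intros a b Hab Ha Hb [H|H]; apply in_seq in Ha; apply in_seq in Hb; unfold Srel.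
    - assert (b = a + 1).
      { destruct (Nat.eq_dec b (a+1)); auto. exfalso; apply (H (a+1)); [apply in_seq|]; lia. }
      subst b. replace (a + 1 - 1) with a by lia. rewrite cdet_consec by lia. apply C1_neq_C0.
    - pose proof (H 1 ltac:(apply in_seq; lia)). pose proof (H m ltac:(apply in_seq; lia)).
      assert (a = 1) by lia. assert (b = m) by lia. subst a b. simpl.
      pose proof (cdet_consec cs m ltac:(lia)) as E.
      unfold m in E; rewrite Wm in E by auto. fold m in E. rewrite W0.
      rewrite cdet_W0_l, E. apply C1_neq_C0. }
  intros a b Ha [Hb [[Hab Ho]|[Hab Ho]]].
  - apply key; auto.
  - intro C; apply Ssym in C; revert C; apply key; auto.
Qed.

Lemma cper_small cs t : t < length cs -> cper cs (t+1) = nth t cs Defs.C0.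
Proof. intros; unfold cper. rewrite Nat.add_sub, Nat.mod_small; auto. Qed.

Lemma m11_one cs i : m11 (Mprod cs i 1) = cper cs i.
Proof. simpl. unfold Cadd, Cmul, Copp, Defs.C0, Defs.C1; destruct (cper cs i); simpl; f_equal; ring. Qed.

Lemma init_ear cs : 4 <= length cs -> quiddity_cycle cs ->
  (exists x, In x cs /\ x <> Defs.C0) -> exists y, ear (Srel cs) (seq 1 (length cs)) y.
Proof.
  intros Hm Hq [x [Hx Hx0]].
  destruct (In_nth cs x Defs.C0 Hx) as [t [Ht Htx]].
  set (m := length cs) in *.
  assert (E : cdet (W cs t) (W cs (t+2)) = x).
  { rewrite <- Htx, <- cper_small by auto. rewrite <- m11_one, F1 by lia.
    f_equal; f_equal; lia. }
  destruct (le_lt_dec (t+3) m).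
  - exists (t+2). destruct (nb_seq_succ m (t+1)) as [_ N1]; try lia.
    destruct (nb_seq_succ m (t+2)) as [N2 _]; try lia.
    apply (mk_ear _ _ _ (t+1) (t+3)); [apply in_seq; lia|lia| | |].
    + replace (t+1+1) with (t+2) in N1 by lia; exact N1.
    + replace (t+2+1) with (t+3) in N2 by lia; exact N2.
    + unfold Srel. replace (t+1-1) with t by lia. replace (t+3-1) with (t+2) by lia. intro C; apply Hx0; rewrite <- E; exact C.
  - destruct (Nat.eq_dec t (m-2)).
    + exists m. destruct (nb_seq_succ m (m-1)) as [_ N1]; try lia.
      destruct (nb_seq_end m) as [_ N2]; try lia.
      apply (mk_ear _ _ _ (m-1) 1); [apply in_seq; lia|lia| |auto|].
      * replace (m-1+1) with m in N1 by lia; exact N1.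
      * unfold Srel. replace (m-1-1) with t by lia. simpl. rewrite W0. intro C.
        apply Hx0. rewrite <- E. replace (t+2) with m by lia.
        unfold m; rewrite Wm, cdet_Wm_r, C by auto. ring.
    + assert (t = m - 1) by lia. subst t.
      exists 1. destruct (nb_seq_succ m 1) as [N1 _]; try lia.
      destruct (nb_seq_end m) as [N2 _]; try lia.
      apply (mk_ear _ _ _ m 2); [apply in_seq; lia|lia|auto|auto|].
      unfold Srel. replace (m-1) with (m-1) by lia. simpl. intro C.
      apply Hx0. rewrite <- E. 
      assert (HW : forall p, cdet p (W cs (m - 1 + 2)) = Copp (cdet p (W cs 1))).
      { intros [p1 p2]. unfold W. replace (m-1+2) with (m + 1) by lia.
        rewrite Mprod_add. assert (Hq' : Mprod cs 1 m = M2negid) by exact Hq. rewrite !Hq'.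
        assert (Hc : cper cs (1 + m) = cper cs 1).
        { unfold cper. fold m. replace (1 + m - 1) with (0 + 1 * m) by lia.
          rewrite Nat.Div0.mod_add. reflexivity. }
        cbn [Mprod]. rewrite Hc. unfold cdet, M2mul, M2negid, M2id, eta; simpl. ring. }
      rewrite HW, C. ring.
Qed.

Theorem theorem5p4 (cs : list Cplx) :
  4 <= length cs ->
  quiddity_cycle cs ->
  (exists x, In x cs /\ x <> C0) ->
  exists T : nat -> nat -> Prop,
    triangulation (length cs) T /\
    (forall i j, T i j -> frieze_entry cs i j <> C0).
Proof.
  intros Hm Hq Hx.
  destruct (main_tri (Srel cs) (Ssym cs) (length cs) (seq 1 (length cs)))
    as [T [H1 [H2 [H3 H4]]]].
  - rewrite length_seq; auto.
  - apply seq_NoDup.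
  - intros a b c Hb; apply in_seq in Hb; apply Strans; lia.
  - apply proper_seq; auto; lia.
  - right; apply init_ear; auto.
  - exists T; split; [split; [|split]|].
    + intros i j Ht; apply chord_diag; auto.
    + exact H2.
    + intros i j Hd Hn; apply H3; auto; apply chord_diag; auto.
    + intros i j Ht. destruct (H1 i j Ht) as [Hij [Hi _]]. apply in_seq in Hi.
      rewrite frieze_W by lia. apply H4; auto.
Qed.
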